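(* Let $G=(S,T,\pi)$ be a two-person win-lose game such that every set in $\mathcal{B}^1(G)$ is finite. Then the following are equivalent: (1) $\mathcal{B}^1_{\downarrow}(G)$ is ascending-union closed; (2) $\mathcal{B}^1_{\downarrow}(G)$ contains no countable strictly ascending chain $A_1\subsetneq A_2\subsetneq\cdots$; (3) $G$ is LNG-free.
   Context: A two-person win-lose game is a triple $G=(S,T,\pi)$ with non-empty sets $S,T$ and $\pi:S\times T\to\{0,1\}$. For $s\in S$, $B_s=\{t\in T:\pi(s,t)=1\}$, $\mathcal{B}^1(G)=\{B_s:s\in S\}$, $\mathcal{B}^1_{\downarrow}(G)=\{A\subseteq T:\exists s\in S,\ A\subseteq B_s\}$. A family $\mathcal{F}$ is ascending-union closed if $A_i\in\mathcal{F}$ ($i\ge1$) with $A_1\subset A_2\subset\cdots$ implies $\bigcup_iA_i\in\mathcal{F}$. The larger number game (LNG) is $(\mathbb{N},\mathbb{N},\pi)$ with $\pi(s,t)=1$ iff $s\ge t$. $G$ is LNG-free if there are no sequences of distinct $s_1,s_2,\ldots\in S$ and distinct $t_1,t_2,\ldots\in T$ with $\pi(s_i,t_j)=1\iff i\ge j$ (i.e., no subgame is isomorphic to LNG). *)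

(* Defs.v *)
From mathcomp Require Import all_boot.
From mathcomp Require Import boolp classical_sets cardinality.
Set Implicit Arguments. Unset Strict Implicit. Unset Printing Implicit Defensive.
Local Open Scope classical_set_scope.

(* A two-person win-lose game (S, T, pi) with pi : S -> T -> {0,1},
   encoded as a boolean payoff (true = 1). *)

Definition Bset (S T : Type) (pi : S -> T -> bool) (s : S) : set T :=
  [set t | pi s t].

Definition B1 (S T : Type) (pi : S -> T -> bool) : set (set T) :=
  [set A | exists s : S, A = Bset pi s].

Definition B1down (S T : Type) (pi : S -> T -> bool) : set (set T) :=
  [set A | exists s : S, A `<=` Bset pi s].

Definition ascending_union_closed (T : Type) (F : set (set T)) : Prop :=
  forall A : nat -> set T,
    (forall i, F (A i)) -> (forall i, A i `<=` A i.+1) ->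
    F (\bigcup_i A i).

Definition has_strict_ascending_chain (T : Type) (F : set (set T)) : Prop :=
  exists A : nat -> set T,
    (forall i, F (A i)) /\ (forall i, A i `<` A i.+1).

Definition LNG_free (S T : Type) (pi : S -> T -> bool) : Prop :=
  ~ exists (s : nat -> S) (t : nat -> T),
      injective s /\ injective t /\
      (forall i j, pi (s i) (t j) <-> (j <= i)%N).

(* Main.v *)
Require Import Defs.
From mathcomp Require Import all_boot.
From mathcomp Require Import boolp classical_sets cardinality.
Set Implicit Arguments. Unset Strict Implicit.
Local Open Scope classical_set_scope.

Lemma choice_fun {A B : Type} (b0 : B) (P : A -> B -> Prop) :
  exists f : A -> B, forall a, (exists b, P a b) -> P a (f a).
Proof.
exists (fun a => match pselect (exists b, P a b) with
  | left h => proj1_sig (constructive_indefinite_description h)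
  | right _ => b0 end).
move=> a h; case: pselect => [h'|//]; exact: proj2_sig.
Qed.

Lemma chain_mono T (A : nat -> set T) :
  (forall i, A i `<=` A i.+1) -> forall i j, (i <= j)%N -> A i `<=` A j.
Proof.
move=> h i j; elim: j => [|j IH]; first by rewrite leqn0 => /eqP ->.
rewrite leq_eqVlt => /orP[/eqP -> //|]; rewrite ltnS => /IH hij.
by move=> x /hij /h.
Qed.

Lemma strict_chain_not_finite T (A : nat -> set T) (F : set T) :
  (forall i, A i `<` A i.+1) -> finite_set F -> (forall i, A i `<=` F) -> False.
Proof.
move=> hA fF hF.
have hsub : forall i, A i `<=` A i.+1 by move=> i; case: (hA i).
have mono := chain_mono hsub.
have ex : forall i, exists a, A i.+1 a /\ ~ A i a.
  move=> i; case: (hA i) => _ hn; apply: contrapT => hn'; apply: hn => x hx.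
  by apply: contrapT => hnx; apply: hn'; exists x.
case: (choice ex) => a ha.
have inj : injective a.
  suff H : forall i j, (i < j)%N -> a i <> a j.
    move=> i j eij; case: (ltngtP i j) => // hij.
    - by case: (H _ _ hij).
    - by case: (H _ _ hij).
  move=> i j hij eij; case: (ha j) => _; apply.
  rewrite -eij; apply: (mono i.+1) => //; exact: (proj1 (ha i)).
have hpre : a @^-1` F = setT.
  apply/seteqP; split => // i _; apply: (hF i.+1); exact: (proj1 (ha i)).
apply: infinite_nat; rewrite -hpre; apply: finite_preimage => //.
by move=> i j _ _; apply: inj.
Qed.

Lemma all_mkseqP {X : Type} (q : pred X) (f : nat -> X) n :
  all q (mkseq f n) <-> (forall j, (j < n)%N -> q (f j)).
Proof.
rewrite /mkseq all_map; split.
- by move=> /allP h j hj; apply: (h j); rewrite mem_iota.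
- by move=> h; apply/allP => j; rewrite mem_iota => /andP[_ hj]; apply: h.
Qed.

Lemma map_mkseq' {X Y : Type} (g : X -> Y) (f : nat -> X) n :
  map g (mkseq f n) = mkseq (g \o f) n.
Proof. by rewrite /mkseq -map_comp. Qed.

Fixpoint Pseq {T S : Type} (nxt : seq S -> T) (sel : seq T -> S) (n : nat)
  : seq (T * S) :=
  match n with
  | 0 => [::]
  | n.+1 => let l := Pseq nxt sel n in
            let t := nxt (map snd l) in
            rcons l (t, sel (rcons (map fst l) t))
  end.

Lemma Pseq_size {T S : Type} nxt sel n : size (@Pseq T S nxt sel n) = n.
Proof. by elim: n => //= n IH; rewrite size_rcons IH. Qed.

Definition pk {T S : Type} nxt sel (k : nat) : T * S :=
  nth (nxt [::], sel [::]) (Pseq nxt sel k.+1) k.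

Lemma Pseq_mk {T S : Type} nxt sel n :
  @Pseq T S nxt sel n = mkseq (pk nxt sel) n.
Proof.
elim: n => // n IH; rewrite mkseqS -IH /pk.
by rewrite [Pseq _ _ n.+1]/= nth_rcons Pseq_size ltnn eqxx.
Qed.

Lemma pk_eq {T S : Type} nxt sel k :
  let t := fun k => (@pk T S nxt sel k).1 in
  let s := fun k => (@pk T S nxt sel k).2 in
  t k = nxt (mkseq s k) /\ s k = sel (mkseq t k.+1).
Proof.
move=> t s.
have e1 : t k = nxt (mkseq s k).
  by rewrite /t /pk [Pseq _ _ k.+1]/= nth_rcons Pseq_size ltnn eqxx /= Pseq_mk map_mkseq'.
split=> //; rewrite {1}/s /pk [Pseq _ _ k.+1]/= nth_rcons Pseq_size ltnn eqxx /=.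
rewrite Pseq_mk !map_mkseq' mkseqS; congr sel; congr rcons; exact: (esym e1).
Qed.

Lemma finite_has S T (pi : S -> T -> bool)
  (hfin : forall A, B1 pi A -> finite_set A) (ls : seq S) :
  finite_set [set t | has (fun s => pi s t) ls].
Proof.
elim: ls => [|x ls IH].
  by apply: (sub_finite_set _ (finite_set0 T)) => t.
have : finite_set (Bset pi x `|` [set t | has (fun s => pi s t) ls]).
  by rewrite finite_setU; split => //; apply: hfin; exists x.
apply: sub_finite_set => t /= /orP[h|h]; [by left | by right].
Qed.

Lemma chain_to_LNG S T (pi : S -> T -> bool) (hS : inhabited S)
  (hfin : forall A, B1 pi A -> finite_set A) :
  has_strict_ascending_chain (B1down pi) -> ~ LNG_free pi.
Proof.
case: hS => s0 [A [hA hch]] hfree.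
have hsub : forall i, A i `<=` A i.+1 by move=> i; case: (hch i).
have mono := chain_mono hsub.
pose U := \bigcup_i A i.
have exn : forall ls : seq S, exists t, U t /\ all (fun s => ~~ pi s t) ls.
  move=> ls; apply: contrapT => hn.
  apply: (strict_chain_not_finite hch (finite_has hfin ls)) => i x hx /=.
  apply: contrapT => hx'; apply: hn; exists x; split; first by exists i.
  by rewrite all_predC; apply/negP.
case: (choice exn) => nxt hnxt.
have exs : forall n (f : nat -> T), (forall j, (j <= n)%N -> U (f j)) ->
    exists s, all (pi s) (mkseq f n.+1).
  move=> n f hf.
  have [i hi] : exists i, forall j, (j <= n)%N -> A i (f j).
    elim: n hf => [|n IH] hf.
      case: (hf 0 (leqnn _)) => i _ hi; exists i => j; rewrite leqn0 => /eqP ->//.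
    case: IH => [j hj|i hi]; first by apply: hf; apply: leqW.
    case: (hf n.+1 (leqnn _)) => i' _ hi'.
    exists (maxn i i') => j; rewrite leq_eqVlt => /orP[/eqP ->|hj].
      by apply: (mono i'); rewrite ?leq_maxr.
    by apply: (mono i); rewrite ?leq_maxl //; apply: hi.
  case: (hA i) => s hs; exists s; apply/all_mkseqP => j hj; apply: hs; exact: hi.
case: (choice_fun s0 (fun lt s => all (pi s) lt)) => sel hsel.
pose t := fun k => (pk nxt sel k).1.
pose s := fun k => (pk nxt sel k).2.
have ht : forall k, t k = nxt (mkseq s k) by move=> k; case: (pk_eq nxt sel k).
have hs : forall k, s k = sel (mkseq t k.+1) by move=> k; case: (pk_eq nxt sel k).
have hU : forall k, U (t k) by move=> k; rewrite ht; case: (hnxt (mkseq s k)).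
have hneg : forall i j, (i < j)%N -> ~~ pi (s i) (t j).
  move=> i j hij; rewrite (ht j); case: (hnxt (mkseq s j)) => _.
  by move/all_mkseqP/(_ i hij); rewrite -ht.
have hpos : forall i j, (j <= i)%N -> pi (s i) (t j).
  move=> i j hji; have := hsel (mkseq t i.+1) (exs i t (fun j _ => hU j)).
  by rewrite -hs => /all_mkseqP/(_ j); apply.
have hiff : forall i j, pi (s i) (t j) <-> (j <= i)%N.
  move=> i j; split; last exact: hpos.
  by move=> h; rewrite leqNgt; apply/negP => /hneg; rewrite h.
apply: hfree; exists s, t; split; [|split=> //].
- move=> i j eij; apply/eqP; rewrite eqn_leq; apply/andP; split.
    by apply/hiff; rewrite -eij; apply: hpos.
  by apply/hiff; rewrite eij; apply: hpos.
- move=> i j eij; apply/eqP; rewrite eqn_leq; apply/andP; split.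
    by apply/hiff; rewrite eij; apply: hpos.
  by apply/hiff; rewrite -eij; apply: hpos.
Qed.

Lemma LNG_to_chain S T (pi : S -> T -> bool) :
  ~ LNG_free pi -> has_strict_ascending_chain (B1down pi).
Proof.
move=> /contrapT [s [t [_ [tinj hiff]]]].
exists (fun i => [set x | exists j, (j <= i)%N /\ x = t j]); split.
  by move=> i; exists (s i) => x [j [hj ->]]; apply/hiff.
move=> i; split.
  by move=> x [j [hj ->]]; exists j; split => //; apply: leqW.
move=> h; case: (h (t i.+1)); first by exists i.+1.
move=> j [hj /tinj ej]; by move: hj; rewrite -ej ltnn.
Qed.

Lemma closed_no_chain S T (pi : S -> T -> bool)
  (hfin : forall A, B1 pi A -> finite_set A) :
  ascending_union_closed (B1down pi) -> ~ has_strict_ascending_chain (B1down pi).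
Proof.
move=> hcl [A [hA hch]].
have hsub : forall i, A i `<=` A i.+1 by move=> i; case: (hch i).
case: (hcl A hA hsub) => s hs.
apply: (strict_chain_not_finite hch (F := Bset pi s)).
  by apply: hfin; exists s.
by move=> i x hx; apply: hs; exists i.
Qed.

Lemma no_chain_closed S T (pi : S -> T -> bool) :
  ~ has_strict_ascending_chain (B1down pi) -> ascending_union_closed (B1down pi).
Proof.
move=> hnc A hA hsub.
have mono := chain_mono hsub.
case: (pselect (exists N, forall m, (N <= m)%N -> A m = A N)) => [[N hN]|hno].
  case: (hA N) => s hs; exists s => x [i _ hx]; apply: hs.
  case: (leqP i N) => hiN; first by apply: (mono i).
  by rewrite -(hN i (ltnW hiN)).
have ex : forall N, exists m, (N <= m)%N /\ A m <> A N.
  move=> N; apply: contrapT => hn; apply: hno; exists N => m hm.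
  apply: contrapT => hne; apply: hn; by exists m.
case: (choice ex) => g hg.
exfalso; apply: hnc; exists (fun k => A (iter k g 0)); split => // k; split.
  by apply: mono; case: (hg (iter k g 0)).
move=> h; case: (hg (iter k g 0)) => hle hne; apply: hne.
by apply/seteqP; split => //; apply: mono.
Qed.

Theorem proposition2p9 (S T : Type) (pi : S -> T -> bool)
  (hS : inhabited S) (hT : inhabited T)
  (hfin : forall A, B1 pi A -> finite_set A) :
  (ascending_union_closed (B1down pi) <-> ~ has_strict_ascending_chain (B1down pi)) /\
  (~ has_strict_ascending_chain (B1down pi) <-> LNG_free pi).
Proof.
split; split.
- exact: closed_no_chain.
- exact: no_chain_closed.
- by move=> hnc hn; apply: hnc; apply: LNG_to_chain.
- by move=> hfree hc; apply: (chain_to_LNG hS hfin hc).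
Qed.
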